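(* Let $(\mathcal{F}_\alpha)_{\alpha<\omega_1}$ and $(\mathcal{G}_\alpha)_{\alpha<\omega_1}$ be transfinite families defined by two (possibly different) approximating families. Then for every $\alpha<\omega_1$ and every infinite $N\subset\mathbb{N}$ there is an infinite $M\subset N$ such that $\mathcal{G}_\alpha^M\subset\mathcal{F}_\alpha$.
   Context: An approximating family assigns to each countable limit ordinal $\alpha$ finite sets $A_n(\alpha)\subset[0,\alpha)$, $n\in\mathbb{N}$, with $A_n(\alpha)\subset A_{n+1}(\alpha)$ and $\lim_n\max A_n(\alpha)=\alpha$. The associated transfinite family $(\mathcal{F}_\alpha)$ of sets of finite subsets of $\mathbb{N}$: $\mathcal{F}_0=\{\emptyset\}$; $\mathcal{F}_{\beta+1}=\{\{n\}\cup E:n\in\mathbb{N},E\in\mathcal{F}_\beta\}\cup\{\emptyset\}$; for limit $\alpha$, $\mathcal{F}_\alpha=\{\emptyset\}\cup\{E\ne\emptyset:E\in\bigcup_{\beta\in A_{\min E}(\alpha)}\mathcal{F}_\beta\}$. For $M=\{m_1<m_2<\dots\}$ and a set $\mathcal{A}$ of finite subsets of $\mathbb{N}$, $\mathcal{A}^M=\{\{m_i:i\in E\}:E\in\mathcal{A}\}$. *)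

(* Defs.v *)
From Stdlib Require List.
From mathcomp Require Import all_boot.
From mathcomp Require Import finmap.
Set Implicit Arguments. Unset Strict Implicit. Unset Printing Implicit Defensive.
Local Open Scope fset_scope.

(* Countable ordinals are modelled by an arbitrary well-ordered type (O, lt)
   in which every element has countably many predecessors; (omega_1, <) is
   such a structure and every such structure is (isomorphic to) an initial
   segment of omega_1. *)
Definition ord_le (O : Type) (lt : O -> O -> Prop) (x y : O) : Prop :=
  lt x y \/ x = y.

Definition countable_ordinal_order (O : Type) (lt : O -> O -> Prop) : Prop :=
  [/\ well_founded lt,
      (forall x y z, lt x y -> lt y z -> lt x z),
      (forall x y, [\/ lt x y, x = y | lt y x]) &
      (forall a : O, exists f : O -> nat,
          forall x y, lt x a -> lt y a -> f x = f y -> x = y)].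

Definition is_zero (O : Type) (lt : O -> O -> Prop) (a : O) : Prop :=
  forall b, ~ lt b a.

Definition is_succ_of (O : Type) (lt : O -> O -> Prop) (a b : O) : Prop :=
  lt b a /\ forall c, lt b c -> ord_le lt a c.

Definition is_limit (O : Type) (lt : O -> O -> Prop) (a : O) : Prop :=
  ~ is_zero lt a /\ forall b, ~ is_succ_of lt a b.

(* Approximating family: to each limit a, finite sets A n a (as lists)
   contained in [0,a), increasing in n, with lim_n max (A n a) = a. *)
Definition approximating_family (O : Type) (lt : O -> O -> Prop)
    (A : nat -> O -> seq O) : Prop :=
  forall a, is_limit lt a ->
    [/\ (forall n b, List.In b (A n a) -> lt b a),
        (forall n b, List.In b (A n a) -> List.In b (A n.+1 a)) &
        (forall b, lt b a -> exists n c, List.In c (A n a) /\ ord_le lt b c)].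

(* F is the transfinite family associated with A (these recursion equations
   determine F uniquely by well-founded recursion). *)
Definition transfinite_family (O : Type) (lt : O -> O -> Prop)
    (A : nat -> O -> seq O) (F : O -> {fset nat} -> Prop) : Prop :=
  [/\ (forall a, is_zero lt a -> forall E, F a E <-> E = fset0),
      (forall a b, is_succ_of lt a b -> forall E,
          F a E <-> (E = fset0 \/ exists n E', F b E' /\ E = n |` E')) &
      (forall a, is_limit lt a -> forall E,
          F a E <-> (E = fset0 \/
             exists n, [/\ n \in E, (forall k, k \in E -> n <= k) &
                          exists b, List.In b (A n a) /\ F b E]))].

(* A^M for M = {m 0 < m 1 < ...} : the image of E under m *)
Definition fimage (m : nat -> nat) (E : {fset nat}) : {fset nat} :=
  [fset m i | i in E].

(* Main.v *)
Require Import Defs.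
From mathcomp Require Import all_boot.
From mathcomp Require Import finmap.
From Stdlib Require Import Classical IndefiniteDescription.
Set Implicit Arguments. Unset Strict Implicit.
Local Open Scope fset_scope.

Definition sinc (u : nat -> nat) := forall i, u i < u i.+1.

Lemma sinc_lt u : sinc u -> {homo u : i j / i < j}.
Proof. move=> hu; exact: (homo_ltn ltn_trans hu). Qed.

Lemma sinc_le u : sinc u -> {mono u : i j / i <= j}.
Proof. by move=> hu; apply: leq_mono; apply: sinc_lt. Qed.

Lemma sinc_ge u : sinc u -> forall i, i <= u i.
Proof. move=> hu; elim=> [|i IH] //; exact: leq_ltn_trans IH (hu i). Qed.

Lemma fimage0 m : fimage m fset0 = fset0.
Proof. by rewrite /fimage imfset0. Qed.

Lemma fimageU1 m n E : fimage m (n |` E) = m n |` fimage m E.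
Proof. by rewrite /fimage imfsetU1. Qed.

Lemma in_fimage m E k : reflect (exists2 i, i \in E & k = m i) (k \in fimage m E).
Proof. by apply: (iffP (imfsetP _ _ _ _)). Qed.

Lemma fimage_comp m s E : fimage s (fimage m E) = fimage (s \o m) E.
Proof.
apply/fsetP=> k; apply/in_fimage/in_fimage=> [[j /in_fimage [i iE ->] ->]|[i iE ->]].
  by exists i.
by exists (m i) => //; apply/in_fimage; exists i.
Qed.

Lemma fimage_eq m s E : {in E, m =1 s} -> fimage m E = fimage s E.
Proof.
move=> h; apply/fsetP=> k; apply/in_fimage/in_fimage=> [][i iE ->]; exists i => //.
  by rewrite h. by rewrite h.
Qed.

Lemma fimage_eq0 m E : fimage m E = fset0 -> E = fset0.
Proof.
move=> h; apply/fsetP=> i; rewrite inE; apply/negbTE/negP=> iE.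
have : m i \in fimage m E by apply/in_fimage; exists i.
by rewrite h inE.
Qed.
Lemma wf_irrefl (O : Type) (lt : O -> O -> Prop) : well_founded lt -> forall x, ~ lt x x.
Proof.
move=> wf x; elim: (wf x) => y _ IH h; exact: (IH y h h).
Qed.

Lemma classify (O : Type) (lt : O -> O -> Prop) a :
  is_zero lt a \/ (exists b, is_succ_of lt a b) \/ is_limit lt a.
Proof.
case: (classic (is_zero lt a)) => hz; first by left.
case: (classic (exists b, is_succ_of lt a b)) => hs; first by right; left.
right; right; split => // b hb; apply: hs; by exists b.
Qed.

Lemma F_empty (O : Type) (lt : O -> O -> Prop) A F :
  transfinite_family lt A F -> forall a, F a fset0.
Proof.
case=> hz hs hl a; case: (classify lt a) => [z|[[b sb]|l]].
- by apply/hz.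
- by apply/(hs _ _ sb); left.
- by apply/(hl _ l); left.
Qed.

Lemma succ_le (O : Type) (lt : O -> O -> Prop) a b c :
  countable_ordinal_order lt -> is_succ_of lt a b -> lt c a -> ord_le lt c b.
Proof.
case=> wf tr tot _ [ba h] ca.
case: (tot c b) => [cb|->|bc]; [by left|by right|].
case: (h _ bc) => [ac|ec]; first by case: (wf_irrefl wf (tr _ _ _ ac ca)).
by subst; case: (wf_irrefl wf ca).
Qed.

Lemma In_mono (O : Type) (lt : O -> O -> Prop) A a :
  approximating_family lt A -> is_limit lt a ->
  forall n k c, n <= k -> List.In c (A n a) -> List.In c (A k a).
Proof.
move=> hA la n k c; case: (hA a la) => _ hinc _.
elim: k => [|k IH]; first by rewrite leqn0 => /eqP ->.
rewrite leq_eqVlt => /orP [/eqP -> //|]; rewrite ltnS => nk h; exact: hinc (IH nk h).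
Qed.

Lemma spread (O : Type) (lt : O -> O -> Prop) A F :
  countable_ordinal_order lt -> approximating_family lt A ->
  transfinite_family lt A F ->
  forall g E s, F g E ->
  (forall x y, x \in E -> y \in E -> x < y -> s x < s y) ->
  (forall x, x \in E -> x <= s x) -> F g (fimage s E).
Proof.
move=> ord hA hF; have [wf _ _ _] := ord; have Fe := F_empty hF.
case: hF => hz hs hl.
move=> g; elim: (wf g) => {}g _ IH E s FE smono sge.
case: (classify lt g) => [z|[[b sb]|l]].
- by move/(hz _ z): FE => ->; rewrite fimage0.
- move/(hs _ _ sb): FE => [->|[n [E' [FE' eE]]]]; first by rewrite fimage0.
  subst E.
  apply/(hs _ _ sb); right; exists (s n), (fimage s E'); split; last by rewrite fimageU1.
  apply: IH => //; first by case: sb.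
    by move=> x y xE yE; apply: smono; apply: fset1Ur.
  by move=> x xE; apply: sge; apply: fset1Ur.
- move/(hl _ l): FE => [->|[n [nE nmin [b [bA FbE]]]]]; first by rewrite fimage0.
  have [hin _ _] := hA g l.
  apply/(hl _ l); right; exists (s n); split.
  + by apply/in_fimage; exists n.
  + move=> k /in_fimage [x xE ->]; have := nmin _ xE; rewrite leq_eqVlt => /orP [/eqP -> //|nx].
    exact: ltnW (smono _ _ nE xE nx).
  + exists b; split; first exact: (In_mono hA l (sge _ nE) bA).
    exact: IH (hin _ _ bA) _ _ FbE smono sge.
Qed.
Definition uinv (u : nat -> nat) (x : nat) := find (fun i => u i == x) (iota 0 x.+1).

Lemma uinvK u : sinc u -> forall i, uinv u (u i) = i.
Proof.
move=> hu i; rewrite /uinv.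
have hh : has (fun j => u j == u i) (iota 0 (u i).+1).
  apply/hasP; exists i => //; rewrite mem_iota /= add0n ltnS; exact: sinc_ge.
have := nth_find 0 hh; have := hh; rewrite has_find size_iota => hlt.
rewrite nth_iota // add0n => /eqP.
by move/(incn_inj (sinc_le hu)).
Qed.

Lemma dominate (O : Type) (lt : O -> O -> Prop) A F :
  countable_ordinal_order lt -> approximating_family lt A ->
  transfinite_family lt A F ->
  forall g E u v, F g (fimage u E) -> sinc u -> sinc v ->
  (forall i, i \in E -> u i <= v i) -> F g (fimage v E).
Proof.
move=> ord hA hF g E u v FE hu hv huv.
have -> : fimage v E = fimage (v \o uinv u) (fimage u E).
  by rewrite fimage_comp; apply: fimage_eq => i _ /=; rewrite uinvK.
apply: (spread ord hA hF FE).
  move=> x y /in_fimage [i iE ->] /in_fimage [j jE ->] /=; rewrite !uinvK //.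
  rewrite ltn_neqAle (sinc_le hu) => /andP [ne le]; apply: (sinc_lt hv).
  by rewrite ltn_neqAle le andbT; apply: contra ne => /eqP ->.
by move=> x /in_fimage [i iE ->] /=; rewrite uinvK // huv.
Qed.
Lemma F_succ_mono (O : Type) (lt : O -> O -> Prop) A F a b X :
  transfinite_family lt A F -> is_succ_of lt a b -> F b X -> F a X.
Proof.
move=> hF sb FX; have Fe := F_empty hF; case: hF => _ hs _.
apply/(hs _ _ sb); case: (fset_0Vmem X) => [->|[x xX]]; first by left.
right; exists x, X; split => //.
apply/fsetP => k; rewrite in_fset1U; case: eqP => // ->; by rewrite xX.
Qed.

Lemma F_lim_img (O : Type) (lt : O -> O -> Prop) A F g m E c :
  transfinite_family lt A F -> is_limit lt g -> sinc m ->
  (forall n, n \in E -> (forall k, k \in E -> n <= k) ->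
     List.In c (A (m n) g) /\ F c (fimage m E)) ->
  F g (fimage m E).
Proof.
move=> hF l hm h; have Fe := F_empty hF; case: hF => _ _ hl.
case: (fset_0Vmem E) => [->|[x xE]]; first by rewrite fimage0.
have ex : exists n, (fun n => n \in E) n by exists x.
case: (ex_minnP ex) => n nE nmin.
have [cA Fc] := h n nE nmin.
apply/(hl _ l); right; exists (m n); split.
- by apply/in_fimage; exists n.
- by move=> k /in_fimage [i iE ->]; rewrite (sinc_le hm); apply: nmin.
- by exists c.
Qed.

Fixpoint diag (b : nat -> nat) i :=
  match i with 0 => b 0 | j.+1 => ((diag b j).+1 + b j.+1)%N end.

Lemma diag_sinc b : sinc (diag b).
Proof. by move=> i /=; rewrite ltnS leq_addr. Qed.

Lemma diag_ge b i : b i <= diag b i.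
Proof. by case: i => //= i; rewrite leq_addl. Qed.

Lemma foldr_max_ge (T : Type) (f : T -> nat) (s : seq T) x :
  List.In x s -> f x <= foldr maxn 0 (map f s).
Proof.
elim: s => //= y s IH [->|h]; first by rewrite leq_maxl.
exact: leq_trans (IH h) (leq_maxr _ _).
Qed.

Fixpoint seqN (p : nat -> nat) (m0 : nat -> nat) i :=
  match i with 0 => p (m0 0) | j.+1 => p (maxn (seqN p m0 j).+1 (m0 j.+1)) end.
Lemma main_claim (O : Type) (lt : O -> O -> Prop) (A B : nat -> O -> seq O)
  (F G : O -> {fset nat} -> Prop) :
  countable_ordinal_order lt ->
  approximating_family lt A -> approximating_family lt B ->
  transfinite_family lt A F -> transfinite_family lt B G ->
  forall g b, ord_le lt b g ->
  exists m, sinc m /\ forall E, G b E -> F g (fimage m E).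
Proof.
move=> ord hA hB hF hG; have [wf tr tot _] := ord.
have FE := F_empty hF; have [Fz Fs Fl] := hF; have [Gz Gs Gl] := hG.
move=> g; elim: (wf g) => {}g _ IH b bg.
case: (classify lt g) => [z|[[d sd]|l]].
- case: bg => [bg'|->]; first by case: (z _ bg').
  exists (fun i => i); split; first by move=> i.
  by move=> E /(Gz _ z) ->; rewrite fimage0.
- have dg : lt d g by case: sd.
  case: bg => [bg'|eb].
  + have bd := succ_le ord sd bg'; have [m [hm h]] := IH d dg b bd.
    exists m; split => // E GE; exact: F_succ_mono hF sd (h _ GE).
  + subst b; have [m [hm h]] := IH d dg d (or_intror erefl).
    exists m; split => // E /(Gs _ _ sd) [->|[n [E' [GE' ->]]]].
      by rewrite fimage0.
    apply/(Fs _ _ sd); right; exists (m n), (fimage m E'); split.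
      exact: h. exact: fimageU1.
- have [Ain _ Aapp] := hA g l.
  case: bg => [bg'|eb].
  + have [k [c [cA bc]]] := Aapp _ bg'; have [m' [hm' h]] := IH c (Ain _ _ cA) b bc.
    have hm : sinc (fun i => addn (m' i) k) by move=> i; rewrite ltn_add2r.
    exists (fun i => addn (m' i) k); split => // E GE.
    apply: (F_lim_img (c:=c) hF l hm) => n nE nmin; split.
    * apply: (In_mono hA l _ cA); exact: leq_addl.
    * apply: (dominate ord hA hF (h _ GE) hm' hm) => i _; exact: leq_addr.
  + subst b.
    have H : forall b, exists t : nat * (nat -> nat), lt b g -> exists c,
        [/\ List.In c (A t.1 g), sinc t.2 & forall E, G b E -> F c (fimage t.2 E)].
      move=> b; case: (classic (lt b g)) => bg; last first.
        by exists (0, fun i => i) => h; case: (bg h).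
      have [k [c [cA bc]]] := Aapp _ bg; have [m' [hm' h]] := IH c (Ain _ _ cA) b bc.
      by exists (k, m') => _; exists c.
    pose ch b := proj1_sig (constructive_indefinite_description _ (H b)).
    have hP b : lt b g -> exists c,
        [/\ List.In c (A (ch b).1 g), sinc (ch b).2 & forall E, G b E -> F c (fimage (ch b).2 E)].
      exact: (proj2_sig (constructive_indefinite_description _ (H b))).
    pose bound i := foldr maxn 0 (map (fun b => maxn ((ch b).2 i) (ch b).1) (B i g)).
    exists (diag bound); split; first exact: diag_sinc.
    move=> E /(Gl _ l) [->|[n [nE nmin [b [bB GbE]]]]]; first by rewrite fimage0.
    have [Bin _ _] := hB g l; have bg := Bin _ _ bB.
    have [c [cA hm' hc]] := hP b bg.
    have le_b i : n <= i -> (ch b).2 i <= diag bound i /\ (ch b).1 <= diag bound i.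
      move=> ni; have bBi := In_mono hB l ni bB.
      have := foldr_max_ge (fun b => maxn ((ch b).2 i) (ch b).1) bBi.
      rewrite geq_max => /andP [h1 h2]; split.
        exact: leq_trans h1 (diag_ge bound i).
      exact: leq_trans h2 (diag_ge bound i).
    apply: (F_lim_img (c:=c) hF l (diag_sinc bound)) => n0 n0E n0min.
    have -> : n0 = n by apply/eqP; rewrite eqn_leq n0min // nmin.
    split.
    * apply: (In_mono hA l _ cA); exact: (le_b n (leqnn n)).2.
    * apply: (dominate ord hA hF (hc _ GbE) hm' (diag_sinc bound)) => i iE.
      exact: (le_b i (nmin _ iE)).1.
Qed.
Theorem proposition3p8 (O : Type) (lt : O -> O -> Prop)
    (A B : nat -> O -> seq O) (F G : O -> {fset nat} -> Prop) :
  countable_ordinal_order lt ->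
  approximating_family lt A -> approximating_family lt B ->
  transfinite_family lt A F -> transfinite_family lt B G ->
  forall (a : O) (N : nat -> Prop),
    (forall k, exists n, k <= n /\ N n) ->
    exists m : nat -> nat,
      (forall i, m i < m i.+1) /\ (forall i, N (m i)) /\
      (forall E, G a E -> F a (fimage m E)).
Proof.
move=> ord hA hB hF hG a N HN.
have [m0 [hm0 h0]] := main_claim ord hA hB hF hG (or_intror (erefl a)).
pose p k := proj1_sig (constructive_indefinite_description _ (HN k)).
have hp k : k <= p k /\ N (p k).
  exact: (proj2_sig (constructive_indefinite_description _ (HN k))).
have hs : sinc (seqN p m0).
  move=> i /=; have [h1 _] := hp (maxn (seqN p m0 i).+1 (m0 i.+1)).
  exact: leq_trans (leq_maxl _ _) h1.
exists (seqN p m0); split; first exact: hs.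
split; first by case=> [|i] /=; apply: (hp _).2.
move=> E GE; apply: (dominate ord hA hF (h0 _ GE) hm0 hs) => i _.
case: i => [|i] /=; first exact: (hp _).1.
exact: leq_trans (leq_maxr _ _) (hp _).1.
Qed.
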